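(* Consider the fifth-order WENO reconstruction of the numerical flux $\hat f_{i\pm\frac12}=\sum_{m=0}^{2}\omega_{m,i\pm\frac12}\hat f^m_{i\pm\frac12}$ on a uniform grid $x_i=x_0+i\Delta x$, for a smooth function $f$. Use the WENO-JS weights with $\epsilon=0$, $$\omega_{m}=\frac{\alpha_m}{\sum_{l=0}^2\alpha_l},\qquad \alpha_m=\frac{d_m}{(\beta^{DS}_{m})^2},\qquad (d_0,d_1,d_2)=\Bigl(\tfrac1{10},\tfrac6{10},\tfrac3{10}\Bigr),$$ where $\beta^{DS}_{m,i\pm\frac12}=\beta_{m,i\pm\frac12}(\delta_{m,i}+C)$. Assume that the Jiang–Shu smoothness indicators satisfy $\beta_{m,i\pm\frac12}=D(1+O(\Delta x^2))$ with $D$ a nonzero constant independent of $m$, that the multipliers satisfy $\delta_{1,i}=\Phi(\bar x_i)$, $\delta_{0,i}=\Phi(\bar x_i)+O(\Delta x)$, $\delta_{2,i}=\Phi(\bar x_i)+O(\Delta x)$ for some function $\Phi$ of the stencil $\bar x_i=(x_{i-k},\dots,x_{i+k})$, and that $C$ is chosen so that $P(\bar x_i):=\Phi(\bar x_i)+C>\kappa>0$ for a fixed $\kappa$ (with $P=O(1)$). Then $$\omega^{DS}_{m,i\pm\frac12}=d_m+O(\Delta x),\qquad m=0,1,2.$$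
   Context: Fifth-order WENO: on the stencil $\{x_{i-2},\dots,x_{i+2}\}$, with $f_j=f(u(x_j))$, the candidate fluxes are $\hat f^0_{i+\frac12}=\frac{2f_{i-2}-7f_{i-1}+11f_i}{6}$, $\hat f^1_{i+\frac12}=\frac{-f_{i-1}+5f_i+2f_{i+1}}{6}$, $\hat f^2_{i+\frac12}=\frac{2f_i+5f_{i+1}-f_{i+2}}{6}$ (the $i-\frac12$ versions by shifting all indices by $-1$). The Jiang–Shu smoothness indicators for $\hat f_{i+\frac12}$ are $\beta_0=\frac{13}{12}(f_{i-2}-2f_{i-1}+f_i)^2+\frac14(f_{i-2}-4f_{i-1}+3f_i)^2$, $\beta_1=\frac{13}{12}(f_{i-1}-2f_i+f_{i+1})^2+\frac14(-f_{i-1}+f_{i+1})^2$, $\beta_2=\frac{13}{12}(f_i-2f_{i+1}+f_{i+2})^2+\frac14(3f_i-4f_{i+1}+f_{i+2})^2$; those for $\hat f_{i-\frac12}$ by index shift $-1$. The same multiplier $\delta_{m,i}$ (depending only on the global stencil position $i$) is used for both $\beta_{m,i+\frac12}$ and $\beta_{m,i-\frac12}$; in the paper the $\delta_{m,i}$ are outputs of a convolutional neural network with differentiable activations and receptive field of size $2k+1$, with $\delta_{0,i+1}=\delta_{1,i}=\delta_{2,i-1}$. *)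

(* Defs.v *)
From mathcomp Require Import all_boot all_order all_algebra.
Set Implicit Arguments. Unset Strict Implicit. Unset Printing Implicit Defensive.
Import Order.TTheory GRing.Theory Num.Theory.
Local Open Scope ring_scope.

Section WENO.
Variable R : realFieldType.

(* Uniform big-O as Delta x -> 0+:  e(h,i) = O(h^p) uniformly in the grid index i. *)
Definition bigO_unif (e : R -> int -> R) (p : nat) : Prop :=
  exists K h0 : R, 0 < h0 /\
    forall h, 0 < h -> h < h0 -> forall i : int, `|e h i| <= K * h ^+ p.

Definition fgrid (f : R -> R) (x0 dx : R) (j : int) : R := f (x0 + j%:~R * dx).

(* Jiang--Shu smoothness indicators beta_{m, i+1/2} on stencil x_{i-2..i+2};
   those for i-1/2 are obtained as betaJS fv (i - 1) m. *)
Definition betaJS (fv : int -> R) (i : int) (m : 'I_3) : R :=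
  match val m with
  | 0%N => 13%:R / 12%:R * (fv (i - 2) - 2%:R * fv (i - 1) + fv i) ^+ 2
           + 1 / 4%:R * (fv (i - 2) - 4%:R * fv (i - 1) + 3%:R * fv i) ^+ 2
  | 1%N => 13%:R / 12%:R * (fv (i - 1) - 2%:R * fv i + fv (i + 1)) ^+ 2
           + 1 / 4%:R * (- fv (i - 1) + fv (i + 1)) ^+ 2
  | _ => 13%:R / 12%:R * (fv i - 2%:R * fv (i + 1) + fv (i + 2)) ^+ 2
           + 1 / 4%:R * (3%:R * fv i - 4%:R * fv (i + 1) + fv (i + 2)) ^+ 2
  end.

Definition dlin (m : 'I_3) : R :=
  match val m with
  | 0%N => 1 / 10%:R
  | 1%N => 6%:R / 10%:R
  | _ => 3%:R / 10%:R
  end.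

Definition alphaJS (b : 'I_3 -> R) (m : 'I_3) : R := dlin m / b m ^+ 2.
Definition omegaJS (b : 'I_3 -> R) (m : 'I_3) : R :=
  alphaJS b m / \sum_(l < 3) alphaJS b l.

Definition stencil (k : nat) (x0 dx : R) (i : int) : 'rV[R]_(k.*2.+1) :=
  \row_(j < k.*2.+1) (x0 + (i + (j : nat)%:Z - k%:Z)%:~R * dx).

(* deep-smoothness weights at x_{i+1/2} and x_{i-1/2}, with
   beta^DS_{m,i+-1/2} = beta_{m,i+-1/2} * (delta_{m,i} + C);
   delta : dx -> m -> i -> R *)
Definition omegaDS_plus (f : R -> R) (x0 : R) (delta : R -> 'I_3 -> int -> R)
    (C dx : R) (i : int) (m : 'I_3) : R :=
  omegaJS (fun l => betaJS (fgrid f x0 dx) i l * (delta dx l i + C)) m.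

Definition omegaDS_minus (f : R -> R) (x0 : R) (delta : R -> 'I_3 -> int -> R)
    (C dx : R) (i : int) (m : 'I_3) : R :=
  omegaJS (fun l => betaJS (fgrid f x0 dx) (i - 1) l * (delta dx l i + C)) m.

End WENO.

(* Main.v *)
Require Import Defs.
From mathcomp Require Import all_boot all_order all_algebra.
From mathcomp Require Import ring lra.
Import Order.TTheory GRing.Theory Num.Theory.
Local Open Scope ring_scope.

Lemma dlin_bd (R : realFieldType) (m : 'I_3) : 0 <= dlin R m <= 1.
Proof. by case: m => [[|[|[|n]]] Hm] //=; rewrite /dlin /=; apply/andP; split; lra. Qed.

Lemma sum3 (R : realFieldType) (F : 'I_3 -> R) :
  \sum_(l < 3) F l = F 0 + F 1 + F 2%:R.
Proof.
rewrite !big_ord_recr big_ord0 /= add0r.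
by congr (F _ + F _ + F _); apply: val_inj.
Qed.

Lemma key (R : realFieldType) (s t : R) (u : 'I_3 -> R) (m : 'I_3) :
  s != 0 -> 0 <= t -> t <= 1/20%:R -> (forall l, `|u l - 1| <= t) ->
  `|omegaJS (fun l => s * u l) m - dlin R m| <= 24%:R * t.
Proof.
move=> s0 t0 t1 H.
have hw : forall l, `|u l ^+ 2 - 1| <= 3%:R*t /\ 1/2%:R <= u l ^+2.
  move=> l; have := H l; rewrite ler_norml => /andP[h1 h2]; split.
    by rewrite ler_norml; apply/andP; split; nra.
  nra.
have hv : forall l, `|(u l ^+ 2)^-1 - 1| <= 6%:R * t /\ 0 < (u l ^+ 2)^-1.
  move=> l; have [h1 h2] := hw l.
  have wp : 0 < u l ^+ 2 by lra.
  split; last by rewrite invr_gt0.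
  have -> : (u l ^+ 2)^-1 - 1 = (1 - u l ^+ 2) / u l ^+ 2.
    by field; rewrite -sqrf_eq0 gt_eqF.
  rewrite normrM normfV (gtr0_norm wp) ler_pdivrMr // distrC; nra.
set v := fun l => (u l ^+ 2)^-1.
have hv' : forall l, `|v l - 1| <= 6%:R * t /\ 0 < v l := hv.
set S := \sum_(l < 3) dlin R l * v l.
have [Sl Sh] : 1 - 6%:R * t <= S /\ S <= 1 + 6%:R * t.
  rewrite /S sum3.
  have := hv' 0; have := hv' 1; have := hv' 2%:R; rewrite /dlin /=.
  move=> [a _] [b _] [c _]; move: a b c; rewrite !ler_norml.
  move=> /andP[a1 a2] /andP[b1 b2] /andP[c1 c2]; split; lra.
have Sp : 0 < S by lra.
have eq : omegaJS (fun l => s * u l) m = dlin R m * v m / S.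
  rewrite /omegaJS /alphaJS.
  have e1 : forall l, dlin R l / (s * u l) ^+ 2 = (dlin R l * v l) * (s ^+ 2)^-1.
    by move=> l; rewrite exprMn invfM /v; ring.
  rewrite (eq_bigr _ (fun l _ => e1 l)) -mulr_suml e1 -/S.
  by field; rewrite gt_eqF // s0.
rewrite eq.
have [Vb _] := hv' m; move: Vb; rewrite ler_norml => /andP[V1 V2].
have -> : dlin R m * v m / S - dlin R m = dlin R m * (v m - S) / S.
  by field; rewrite gt_eqF.
have /andP[d0 d1] := dlin_bd R m.
rewrite normrM normfV (gtr0_norm Sp) ler_pdivrMr // normrM (ger0_norm d0).
have : `|v m - S| <= 12%:R * t by rewrite ler_norml; apply/andP; split; lra.
set x := `|v m - S|. have : 0 <= x by apply: normr_ge0.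
nra.
Qed.

Lemma omegaJS_ext (R : realFieldType) (b1 b2 : 'I_3 -> R) m :
  (forall l, b1 l = b2 l) -> omegaJS b1 m = omegaJS b2 m.
Proof.
move=> H; rewrite /omegaJS /alphaJS H; congr (_ / _).
by apply: eq_bigr => l _; rewrite H.
Qed.

Lemma bigO_ext (R : realFieldType) (e1 e2 : R -> int -> R) p :
  (forall h i, 0 < h -> e1 h i = e2 h i) -> bigO_unif e1 p -> bigO_unif e2 p.
Proof.
move=> H [K [h0 [h0p Hb]]]; exists K, h0; split => // h hp hh i.
by rewrite -H //; apply: Hb.
Qed.

Lemma bnd2 (R : realFieldType) (K x h : R) :
  0 < h -> h < 1 -> `|x| <= K * h ^+ 2 -> `|x| <= `|K| * h.
Proof.
move=> hp h1 H; apply: (le_trans H).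
have : K <= `|K| by apply: ler_norm.
rewrite expr2 => hK; apply: (le_trans (y := `|K| * (h * h))).
  by apply: ler_wpM2r => //; apply: mulr_ge0; apply: ltW.
apply: ler_wpM2l; first exact: normr_ge0.
by rewrite ger_pMr //; apply: ltW.
Qed.

Lemma bnd1 (R : realFieldType) (K x h : R) :
  0 < h -> `|x| <= K * h ^+ 1 -> `|x| <= `|K| * h.
Proof.
move=> hp H; apply: (le_trans H); rewrite expr1.
have : K <= `|K| by apply: ler_norm.
nra.
Qed.

Arguments bnd2 {R K x h}.
Arguments bnd1 {R K x h}.

Lemma ord3P (P : 'I_3 -> Prop) : P 0 -> P 1 -> P 2%:R -> forall l, P l.
Proof.
move=> h0 h1 h2 [[|[|[|n]]] Hl] //.
- by have -> : Ordinal Hl = 0 by apply: val_inj.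
- by have -> : Ordinal Hl = 1 by apply: val_inj.
- by have -> : Ordinal Hl = 2%:R by apply: val_inj.
Qed.

Theorem mainTheorem2 (R : realFieldType) (f : R -> R) (x0 : R) (k : nat)
  (delta : R -> 'I_3 -> int -> R) (Phi : 'rV[R]_(k.*2.+1) -> R) (C kappa : R)
  (D : R -> int -> R)
  (hD : forall (dx : R) (i : int), 0 < dx -> D dx i != 0)
  (hbeta : forall m : 'I_3, exists e : R -> int -> R, bigO_unif e 2 /\
      forall (dx : R) (i : int), 0 < dx -> betaJS (fgrid f x0 dx) i m = D dx i * (1 + e dx i))
  (hdelta1 : forall (dx : R) (i : int), 0 < dx -> delta dx 1 i = Phi (stencil k x0 dx i))
  (hdelta0 : bigO_unif (fun dx i => delta dx 0 i - Phi (stencil k x0 dx i)) 1)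
  (hdelta2 : bigO_unif (fun dx i => delta dx 2%:R i - Phi (stencil k x0 dx i)) 1)
  (hkappa : 0 < kappa)
  (hP : forall (dx : R) (i : int), 0 < dx -> kappa < Phi (stencil k x0 dx i) + C)
  (hPbd : bigO_unif (fun dx i => Phi (stencil k x0 dx i) + C) 0) :
  forall m : 'I_3,
    bigO_unif (fun dx i => omegaDS_plus f x0 delta C dx i m - dlin R m) 1 /\
    bigO_unif (fun dx i => omegaDS_minus f x0 delta C dx i m - dlin R m) 1.
Proof.
have gen : forall (sh : int) (m : 'I_3), bigO_unif (fun dx i =>
   omegaJS (fun l => betaJS (fgrid f x0 dx) (i - sh) l * (delta dx l i + C)) m
   - dlin R m) 1.
  move=> sh m.
  have [e0 [[K0 [a0 [a0p He0]]] Hb0]] := hbeta 0.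
  have [e1 [[K1 [a1 [a1p He1]]] Hb1]] := hbeta 1.
  have [e2 [[K2 [a2 [a2p He2]]] Hb2]] := hbeta 2%:R.
  have [L0 [c0 [c0p Hd0]]] := hdelta0.
  have [L2 [c2 [c2p Hd2]]] := hdelta2.
  set Ke := `|K0| + `|K1| + `|K2|.
  set Kn := (`|L0| + `|L2|) / kappa.
  have Ke0 : 0 <= Ke by rewrite /Ke !addr_ge0 ?normr_ge0.
  have Kn0 : 0 <= Kn by rewrite /Kn divr_ge0 ?addr_ge0 ?normr_ge0 // ltW.
  set A := Ke + Kn + Ke * Kn.
  have A0 : 0 <= A by rewrite /A !addr_ge0 // mulr_ge0.
  set h0 := Order.min a0 (Order.min a1 (Order.min a2 (Order.min c0
              (Order.min c2 (Order.min 1 (1 / (20%:R * (A + 1)))))))).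
  exists (24%:R * A), h0; split.
    rewrite /h0 !lt_min a0p a1p a2p c0p c2p ltr01 /=.
    by rewrite divr_gt0 // mulr_gt0 //; lra.
  move=> h hp; rewrite /h0 !lt_min => /and5P[ha0 ha1 ha2 hc0 /andP[hc2 /andP[h1 hA]]] i.
  set P := Phi (stencil k x0 h i) + C.
  have Pk : kappa < P by apply: hP.
  have P0 : P != 0 by rewrite gt_eqF //; lra.
  set E := fun l : 'I_3 => if val l == 0%N then e0 h (i - sh)
            else if val l == 1%N then e1 h (i - sh) else e2 h (i - sh).
  set u := fun l => (1 + E l) * (1 + (delta h l i - Phi (stencil k x0 h i)) / P).
  have Hu : forall l, betaJS (fgrid f x0 h) (i - sh) l * (delta h l i + C)
                      = (D h (i - sh) * P) * u l.
    apply: ord3P; rewrite /u /E /=.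
    - by rewrite Hb0 // /P; field.
    - by rewrite Hb1 // /P; field.
    - by rewrite Hb2 // /P; field.
  rewrite (omegaJS_ext _ _ _ _ Hu) expr1 -mulrA.
  apply: key.
  - by rewrite mulf_neq0 // hD.
  - exact: mulr_ge0 A0 (ltW hp).
  - move: hA; rewrite ltr_pdivlMr; last by rewrite mulr_gt0 //; lra.
    move=> hA; nra.
  have hx : forall l, `|E l| <= Ke * h.
    have hK : `|K0| <= Ke /\ `|K1| <= Ke /\ `|K2| <= Ke.
      have := normr_ge0 K0; have := normr_ge0 K1; have := normr_ge0 K2.
      rewrite /Ke; lra.
    have hh := ltW hp.
    apply: ord3P; rewrite /E /=.
    - by apply: le_trans (bnd2 hp h1 (He0 h hp ha0 (i-sh))) _; apply: ler_wpM2r => //; case: hK.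
    - by apply: le_trans (bnd2 hp h1 (He1 h hp ha1 (i-sh))) _; apply: ler_wpM2r => //; case: hK => _ [].
    - by apply: le_trans (bnd2 hp h1 (He2 h hp ha2 (i-sh))) _; apply: ler_wpM2r => //; case: hK => _ [].
  have hKn : Kn * kappa = `|L0| + `|L2| by rewrite /Kn; field; rewrite gt_eqF.
  have Pp : 0 < P by lra.
  have Knh : 0 <= Kn * h by rewrite mulr_ge0 // ltW.
  have hy : forall l, `|(delta h l i - Phi (stencil k x0 h i)) / P| <= Kn * h.
    apply: ord3P => /=.
    - rewrite normrM normfV (gtr0_norm Pp) ler_pdivrMr //.
      have := bnd1 hp (Hd0 h hp hc0 i) => /= H.
      have := normr_ge0 L2; nra.
    - by rewrite hdelta1 // subrr mul0r normr0.
    - rewrite normrM normfV (gtr0_norm Pp) ler_pdivrMr //.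
      have := bnd1 hp (Hd2 h hp hc2 i) => /= H.
      have := normr_ge0 L0; nra.
  move=> l; rewrite /u; have := hx l; have := hy l.
  set x := E l; set y := (delta h l i - _) / P => hy' hx'.
  have -> : (1 + x) * (1 + y) - 1 = x + y + x * y by ring.
  apply: le_trans (ler_normD _ _) _.
  apply: le_trans (lerD (ler_normD _ _) (lexx _)) _.
  rewrite [`|x * y|]normrM.
  have hxy : `|x| * `|y| <= (Ke * h) * (Kn * h).
    by apply: ler_pM => //; apply: normr_ge0.
  have : Ke * h * (Kn * h) <= Ke * Kn * h.
    have : 0 <= Ke * Kn * h by apply: mulr_ge0; [apply: mulr_ge0|apply: ltW].
    nra.
  move=> H2; rewrite /A; lra.
move=> m; split.
  apply: bigO_ext (gen 0 m) => h i _; by rewrite /omegaDS_plus subr0.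
by apply: bigO_ext (gen 1 m).
Qed.
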